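(* Let $L$ be a friendly labeling function, $T$ a tree with root edge, and $e$ an interior edge of $T$. Let $$g=\prod_{i=1}^d q_{(l_i,m_i)}-\prod_{i=1}^d q_{(l'_i,m_i)}\in I_{T_{e,-},L},$$ where $(l_i,m_i),(l'_i,m_i)\in{\rm im}(L^{T_{e,-}})$ and $m_i$ denotes the label on $e$. Let $n_1,\dots,n_d$ be labelings of the edges of $T_{e,+}$ other than $e$ such that $(m_i,n_i)\in{\rm im}(L^{T_{e,+}})$ for each $i$. Then $(l_i,m_i,n_i),(l'_i,m_i,n_i)\in{\rm im}(L^T)$ for all $i$, and $$g^*=\prod_{i=1}^d q_{(l_i,m_i,n_i)}-\prod_{i=1}^d q_{(l'_i,m_i,n_i)}$$ lies in $I_{T,L}$. The analogous statement holds with the roles of $T_{e,-}$ and $T_{e,+}$ exchanged.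
   Context: Let $G$ be a finite abelian group written additively, $\mathcal{L}$ a finite set, $L:G\to\mathcal{L}$ a function. A tree with root edge is a finite tree $T$ with a distinguished leaf $\rho$; the edge at $\rho$ is the root edge. Every vertex $v\neq\rho$ has a unique parent edge (first edge on the path from $v$ to $\rho$); other edges at $v$ are child edges. Vertices that are neither $\rho$ nor leaves are interior vertices; an edge is interior if both endpoints are interior vertices. $E(T)$ is the edge set. An edge $e'$ is below $e$ if $e$ lies on the path from $\rho$ to $e'$ (so $e$ is below itself). A map $h:E(T)\to G$ is a consistent assignment if for every interior vertex $v$, $h(\text{parent edge of }v)=\sum h(\text{child edges of }v)$. ${\rm im}(L^T)=\{L\circ h: h\text{ consistent}\}$ is the set of consistent labelings. $I_{T,L}$ is the kernel of $\mathbb{C}[q_\lambda:\lambda\in{\rm im}(L^T)]\to\mathbb{C}[a^{(e)}_l:e\in E(T),l\in\mathcal{L}]$, $q_\lambda\mapsto\prod_{e\in E(T)}a^{(e)}_{\lambda(e)}$; the same definitions apply to any tree with root edge. For an edge $e$, $T_{e,-}$ is the tree formed by all edges below $e$, regarded as a tree with root edge $e$ (distinguished leaf = endpoint of $e$ closer to $\rho$); $T_{e,+}$ is the tree formed by $e$ and all edges not below $e$, with the same $\rho$ (the endpoint of $e$ farther from $\rho$ becomes a leaf). Labelings of $T_{e,-}$ are written $(l,m)$ and of $T_{e,+}$ as $(m,n)$, and of $T$ as $(l,m,n)$, where $l$ is the restriction to edges of $T_{e,-}$ other than $e$, $m$ the value on $e$, $n$ the restriction to edges of $T_{e,+}$ other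 than $e$. Friendliness: for $m\ge3$ let $Z_m=\{(g_1,\dots,g_m)\in G^m: g_1+\cdots+g_{m-1}=g_m\}$ and $\widetilde{L}(g_1,\dots,g_m)=(L(g_1),\dots,L(g_m))$; $L$ is $m$-friendly if for every $l\in\widetilde{L}(Z_m)$ and every $i$, the set of $i$-th coordinates of elements of $\widetilde{L}^{-1}(l)$ equals $L^{-1}(l_i)$; $L$ is friendly if it is $m$-friendly for all $m\ge3$. *)

(* Defs.v *)
From HB Require Import structures.
From mathcomp Require Import all_boot all_order all_algebra.
From mathcomp Require Import mpoly.
From mathcomp Require Import Rstruct complex.

Set Implicit Arguments.
Unset Strict Implicit.
Unset Printing Implicit Defensive.

Import GRing.Theory.
Local Open Scope ring_scope.

Definition CC : Type := complex Rdefinitions.R.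

(* A tree with root edge is represented by the vertex [v] at the far   *)
(* end of the root edge (the near end is the distinguished leaf rho):  *)
(* [Node ts] is a vertex whose children (the subtrees hanging off its  *)
(* child edges) are [ts].  Every non-rho vertex v corresponds to its   *)
(* parent edge, and edges are addressed by the path (sequence of child *)
(* indices) from the root edge: [::] is the root edge, [i] is the i-th *)
(* child edge of the top vertex, etc.  A vertex [Node [::]] is a leaf. *)
Inductive tree := Node of seq tree.

Definition leaf := Node [::].

Definition children (t : tree) : seq tree := let: Node ts := t in ts.

Fixpoint edges (t : tree) : seq (seq nat) :=
  let: Node ts := t in
  let es := map edges ts in
  [::] :: flatten [seq map (cons i) (nth [::] es i) | i <- iota 0 (size ts)].

(* the subtree below the edge with path p (T_{e,-} when p is the path of e) *)
Fixpoint subtree (t : tree) (p : seq nat) : tree :=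
  match p with
  | [::] => t
  | i :: p' => subtree (nth leaf (children t) i) p'
  end.

(* t with everything strictly below the edge at path p removed, so that the
   far endpoint of that edge becomes a leaf (T_{e,+}) *)
Fixpoint cut (t : tree) (p : seq nat) : tree :=
  match p with
  | [::] => leaf
  | i :: p' =>
      Node [seq (if j == i then cut (nth leaf (children t) j) p'
                 else nth leaf (children t) j) | j <- iota 0 (size (children t))]
  end.

Definition edge (t : tree) := 'I_(size (edges t)).
Definition epath (t : tree) (e : edge t) : seq nat := nth [::] (edges t) e.

Definition far_is_leaf (t : tree) (e : edge t) : bool :=
  size (children (subtree t (epath e))) == 0%N.

Definition is_child (t : tree) (e e' : edge t) : bool :=
  prefix (epath e) (epath e') && (size (epath e') == (size (epath e)).+1).

(* e' is below e (e is on the path from rho to e'; e is below itself) *)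
Definition below (t : tree) (e e' : edge t) : bool := prefix (epath e) (epath e').

(* interior edge: both endpoints are interior vertices (the near endpoint is
   rho for the root edge, otherwise it is interior since it has e as a child) *)
Definition interior_edge (t : tree) (e : edge t) : bool :=
  (epath e != [::]) && ~~ far_is_leaf e.

Section Labelings.
Variables (G : finZmodType) (Lab : finType) (L : G -> Lab).

Definition consistent (t : tree) (h : {ffun edge t -> G}) : bool :=
  [forall e : edge t, ~~ far_is_leaf e ==>
     (h e == \sum_(e' : edge t | is_child e e') h e')].

Definition labeling (t : tree) := {ffun edge t -> Lab}.

Definition imL (t : tree) : {set labeling t} :=
  [set lam | [exists h : {ffun edge t -> G},
                consistent h && (lam == [ffun e => L (h e)])]].

(* label of the edge with path p (default L 0 for paths that are not edges) *)
Definition lab_at (t : tree) (lam : labeling t) (p : seq nat) : Lab :=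
  if @insub _ (fun k => k < size (edges t))%N 'I_(size (edges t))
       (index p (edges t)) is Some i then lam i else L 0.

Definition Tminus (t : tree) (e : edge t) : tree := subtree t (epath e).
Definition Tplus (t : tree) (e : edge t) : tree := cut t (epath e).

(* (l,m,n): gluing a labeling of T_{e,-} and a labeling of T_{e,+}; the
   label of e is taken from the T_{e,-} labeling (in the statement the two
   labelings agree on e) *)
Definition join (t : tree) (e : edge t)
    (lm : labeling (Tminus e)) (lp : labeling (Tplus e)) : labeling t :=
  [ffun e' => if below e e' then lab_at lm (drop (size (epath e)) (epath e'))
              else lab_at lp (epath e')].

Definition qidx (t : tree) := {lam : labeling t | lam \in imL t}.
Definition nq (t : tree) : nat := #|{: qidx t}|.
Definition na (t : tree) : nat := #|{: edge t * Lab}|.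

(* q_lambda (the variable when lambda is in im(L^T); 0 otherwise -- only
   used for lambda in im(L^T)) *)
Definition qvar (t : tree) (lam : labeling t) : {mpoly CC[nq t]} :=
  if @insub _ (fun x => x \in imL t) (qidx t) lam is Some x
  then 'X_(enum_rank x) else 0.

Definition avar (t : tree) (e : edge t) (l : Lab) : {mpoly CC[na t]} :=
  'X_(enum_rank (e, l)).

Definition qimage (t : tree) : (nq t).-tuple {mpoly CC[na t]} :=
  [tuple \prod_(e : edge t) avar e (val (enum_val i) e) | i < nq t].

Definition ideal (t : tree) : pred {mpoly CC[nq t]} :=
  fun p => comp_mpoly (qimage t) p == 0.

Definition inZ (m : nat) (g : {ffun 'I_m.+1 -> G}) : bool :=
  \sum_(j < m.+1 | j != ord_max) g j == g ord_max.

Definition m_friendly (m : nat) : Prop :=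
  forall l : {ffun 'I_m.+1 -> Lab},
    (exists g, inZ g /\ forall j, L (g j) = l j) ->
    forall (i : 'I_m.+1) (x : G),
      (exists g, [/\ inZ g, (forall j, L (g j) = l j) & g i = x]) <-> L x = l i.

(* friendly: (m+1)-friendly for all m+1 >= 3 *)
Definition friendly : Prop := forall m : nat, (2 <= m)%N -> m_friendly m.

End Labelings.
Arguments ideal [G Lab] L t _.

(* Main.v *)
Require Import Defs.
From HB Require Import structures.
From mathcomp Require Import all_boot all_order all_algebra.
From mathcomp Require Import mpoly.
From mathcomp Require Import Rstruct complex.
Local Open Scope ring_scope.
Set Implicit Arguments.
Unset Strict Implicit.
Import GRing.Theory.

Fixpoint valid (t : tree) (q : seq nat) : bool :=
  match q with
  | [::] => true
  | i :: q' => (i < size (children t))%N && valid (nth leaf (children t) i) q'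
  end.

Lemma sum_iota_eq n i (c : nat -> nat) :
  (\sum_(j <- iota 0 n) (if j == i then c j else 0) = if (i < n) then c i else 0)%N.
Proof.
elim: n => [|n IH]; first by rewrite big_nil.
rewrite -addn1 iotaD big_cat /= big_seq1 IH add0n.
have [lt|ge] := ltnP i n.
  by rewrite (ltn_addr 1 lt) (gtn_eqF lt) addn0.
rewrite addn1; case: eqP => [->|ne]; first by rewrite ltnSn.
rewrite addn0; case: ifP => //; rewrite ltnS => le.
by case: ne; apply/eqP; rewrite eqn_leq le ge.
Qed.

Lemma count_edges t q : count_mem q (edges t) = valid t q.
Proof.
elim: q t => [|i q IH] [ts] /=.
  rewrite count_flatten -map_comp sumnE big_map big1 // => j _.
  by rewrite /= count_map (eq_count (a2 := pred0)) ?count_pred0.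
rewrite add0n count_flatten -map_comp sumnE big_map.
rewrite (eq_bigr (fun j => if j == i then count_mem q (nth [::] [seq edges i | i <- ts] j) else 0%N)); last first.
  move=> j _ /=; rewrite count_map.
  case: eqP => [->|ne].
    by apply: eq_count => x /=; rewrite eqseq_cons eqxx.
  by rewrite (eq_count (a2 := pred0)) ?count_pred0 // => x /=; rewrite eqseq_cons; case: eqP.
rewrite sum_iota_eq; case: ifP => // lt.
by rewrite (nth_map leaf) // IH.
Qed.

Lemma mem_edges t q : (q \in edges t) = valid t q.
Proof. by rewrite -has_pred1 has_count count_edges lt0b. Qed.

Lemma uniq_edges t : uniq (edges t).
Proof. by apply: count_mem_uniq => q; rewrite count_edges mem_edges. Qed.

Definition kk (t : tree) (q : seq nat) : nat := size (children (subtree t q)).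

Lemma subtree_cat t p q : subtree t (p ++ q) = subtree (subtree t p) q.
Proof. by elim: p t => [|i p IH] t //=. Qed.

Lemma valid_cat t p q : valid t (p ++ q) = valid t p && valid (subtree t p) q.
Proof. by elim: p t => [|i p IH] t //=; rewrite IH andbA. Qed.

Lemma valid_rcons t q i : valid t (rcons q i) = valid t q && (i < kk t q)%N.
Proof. by rewrite -cats1 valid_cat /= andbT. Qed.

Lemma size_children_cut t p : p != [::] -> size (children (cut t p)) = size (children t).
Proof. by case: p => // i p _ /=; rewrite size_map size_iota. Qed.

Lemma nth_cut t i p j : (j < size (children t))%N ->
  nth leaf (children (cut t (i :: p))) j =
  if j == i then cut (nth leaf (children t) j) p else nth leaf (children t) j.
Proof. by move=> lt /=; rewrite (nth_map 0%N) ?size_iota // nth_iota. Qed.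

Lemma valid_leaf q : valid leaf q = (q == [::]).
Proof. by case: q. Qed.

Lemma valid_cut t p q : valid t p ->
  valid (cut t p) q = valid t q && ~~ (prefix p q && (q != p)).
Proof.
elim: p t q => [|i p IH] t q.
  by move=> _ /=; case: q => [|j q] //=; rewrite andbF.
move=> /= /andP[lti vp]; case: q => [|j q] //=.
rewrite size_map size_iota.
case: (ltnP j (size (children t))) => ltj /=; last by [].
rewrite (nth_map 0%N) ?size_iota // nth_iota // add0n; case: (eqVneq j i) => [->|nji] /=.
  by rewrite IH // eqseq_cons eqxx.
by rewrite andbT.
Qed.

Lemma kk_cut t p q : valid t p -> valid (cut t p) q ->
  kk (cut t p) q = if q == p then 0%N else kk t q.
Proof.
elim: p t q => [|i p IH] t q.
  by move=> _ /=; rewrite valid_leaf => /eqP ->.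
move=> /= /andP[lti vp]; case: q => [|j q] //=.
  by move=> _; rewrite /kk /= size_map size_iota.
rewrite size_map size_iota => /andP[ltj]; rewrite /kk /= (nth_map 0%N) ?size_iota // nth_iota // add0n.
case: (eqVneq j i) => [->|nji] /=.
  by move=> vq; rewrite eqseq_cons eqxx /= -(IH _ _ vp vq).
by rewrite eqseq_cons (negPf nji).
Qed.

Lemma epath_valid t (e : edge t) : valid t (epath e).
Proof. by rewrite -mem_edges mem_nth. Qed.

Lemma edge_of t q : valid t q -> {e : edge t | epath e = q}.
Proof.
move=> v; have h : (index q (edges t) < size (edges t))%N by rewrite index_mem mem_edges.
by exists (Ordinal h); rewrite /epath /= nth_index // mem_edges.
Qed.

Lemma index_epath t (e : edge t) : index (epath e) (edges t) = e.
Proof. by rewrite /epath index_uniq // uniq_edges. Qed.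

Lemma epath_inj t : injective (@epath t).
Proof. by move=> e1 e2 h; apply: ord_inj; rewrite -(index_epath e1) -(index_epath e2) h. Qed.

Definition toE t (d : edge t) q : edge t := odflt d (insub (index q (edges t))).

Lemma toE_epath t (d e : edge t) : toE d (epath e) = e.
Proof.
rewrite /toE; case: insubP => [i _ ei|]; last by rewrite index_epath ltn_ord.
by apply/val_inj; rewrite ei index_epath.
Qed.

Lemma epath_toE t (d : edge t) q : valid t q -> epath (toE d q) = q.
Proof. by case/edge_of => e <-; rewrite toE_epath. Qed.

Lemma big_edges (R : Type) (idx : R) (op : R -> R -> R) t (P : pred (seq nat)) (F : seq nat -> R) :
  \big[op/idx]_(e : edge t | P (epath e)) F (epath e) = \big[op/idx]_(q <- edges t | P q) F q.
Proof. by rewrite (big_nth [::]) big_mkord. Qed.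

Lemma sum_child (V : nmodType) t (e : edge t) (F : seq nat -> V) :
  \sum_(e' : edge t | is_child e e') F (epath e') = \sum_(i < kk t (epath e)) F (rcons (epath e) i).
Proof.
rewrite /is_child.
rewrite (@big_edges _ _ _ t (fun q => prefix (epath e) q && (size q == (size (epath e)).+1)) F).
rewrite -big_filter -(big_mkord xpredT (fun i => F (rcons (epath e) i))) -(big_map (rcons (epath e)) xpredT).
apply: perm_big; apply: uniq_perm.
- by apply: filter_uniq; apply: uniq_edges.
- by rewrite (map_inj_uniq (@rcons_injr _ _)) /index_iota iota_uniq.
move=> q; rewrite mem_filter mem_edges; apply/idP/idP.
  case/andP => /andP[/prefixP[s ->]]; rewrite size_cat -addn1 eqn_add2l.
  case: s => [|i [|]] //= _; rewrite cats1 valid_rcons => /andP[_ lt].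
  by apply: map_f; rewrite mem_index_iota.
case/mapP => i; rewrite mem_index_iota /= => lt ->.
by rewrite prefix_rcons size_rcons eqxx valid_rcons epath_valid.
Qed.

Lemma edges_gt0 t : (0 < size (edges t))%N. Proof. by case: t. Qed.
Definition e0 t : edge t := Ordinal (edges_gt0 t).

Section Lab.
Variables (G : finZmodType) (Lab : finType) (L : G -> Lab).

Definition pcons t (h : seq nat -> G) :=
  forall q, valid t q -> (0 < kk t q)%N -> h q = \sum_(i < kk t q) h (rcons q i).

Lemma lab_at_epath t (lam : labeling Lab t) (e : edge t) : lab_at L lam (epath e) = lam e.
Proof.
rewrite /lab_at; case: insubP => [i _ ei|]; last by rewrite index_epath ltn_ord.
by congr (lam _); apply/val_inj; rewrite /= ei index_epath.
Qed.

Lemma imLP t (lam : labeling Lab t) :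
  reflect (exists h, pcons t h /\ forall e, lam e = L (h (epath e))) (lam \in imL L t).
Proof.
apply: (iffP idP).
  rewrite inE => /existsP[hf /andP[/forallP cons /eqP ->]].
  exists (fun q => hf (toE (e0 t) q)); split; last by move=> e; rewrite ffunE toE_epath.
  move=> q vq kq; case: (edge_of vq) => e ee; subst q.
  have := cons e; rewrite /far_is_leaf -lt0n kq /= toE_epath => /eqP ->.
  rewrite (eq_bigr (fun e' => hf (toE (e0 t) (epath e')))); last by move=> e' _; rewrite toE_epath.
  by rewrite (sum_child e (fun q => hf (toE (e0 t) q))).
case=> h [hc hl]; rewrite inE; apply/existsP; exists [ffun e => h (epath e)].
apply/andP; split; last by apply/eqP/ffunP => e; rewrite !ffunE hl.
apply/forallP => e; apply/implyP; rewrite /far_is_leaf -lt0n => kq.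
rewrite ffunE (hc _ (epath_valid e) kq); apply/eqP.
rewrite (eq_bigr (fun e' => h (epath e'))); last by move=> e' _; rewrite ffunE.
by rewrite (sum_child e h).
Qed.
End Lab.


Lemma sum_but_max (V: nmodType) n (F : 'I_n.+1 -> V) :
  \sum_(j < n.+1 | j != ord_max) F j = \sum_(i < n) F (widen_ord (leqnSn n) i).
Proof.
rewrite big_mkcond big_ord_recr /= eqxx addr0; apply: eq_bigr => i _.
by rewrite ifT // -(inj_eq val_inj) /= neq_ltn ltn_ord.
Qed.

Definition tree_ind2 (P : tree -> Prop)
  (H : forall ts, (forall i, (i < size ts)%N -> P (nth leaf ts i)) -> P (Node ts)) : forall t, P t :=
  fix F t := match t with
  | Node ts => H ts ((fix G (ts : seq tree) : forall i, (i < size ts)%N -> P (nth leaf ts i) :=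
       match ts with
       | [::] => fun i hi => match (notF hi) with end
       | t :: ts' => fun i => match i with
                   | 0 => fun _ => F t
                   | i'.+1 => fun hi => G ts' i' hi end
       end) ts)
  end.

Section Lab2.
Variables (G : finZmodType) (Lab : finType) (L : G -> Lab).

Lemma fstep (fr : friendly L) n (c : 'I_n.+1 -> G) a :
  L a = L (\sum_(i < n.+1) c i) ->
  exists c' : 'I_n.+1 -> G, (forall i, L (c' i) = L (c i)) /\ \sum_i c' i = a.
Proof.
move=> La; case: n c La => [|n] c La.
  exists (fun _ => a); split; last by rewrite big_ord1.
  by move=> i; rewrite ord1 La big_ord1.
pose S := \sum_(i < n.+2) c i.
pose g0 := [ffun j : 'I_n.+3 => if (j < n.+2)%N then c (inord j) else S].
have g0w : forall i : 'I_n.+2, g0 (widen_ord (leqnSn _) i) = c i.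
  by move=> i; rewrite ffunE /= ltn_ord inord_val.
have Zg0 : inZ g0.
  rewrite /inZ sum_but_max ffunE /= ltnn; apply/eqP.
  by apply: eq_bigr => i _; rewrite g0w.
have := fr n.+2 isT [ffun j => L (g0 j)] (ex_intro _ g0 (conj Zg0 (fun j => esym (ffunE _ _)))) ord_max a.
case=> _ /(_ _)/Wrap[].
  by rewrite ffunE ffunE /= ltnn.
case=> g [Zg Lg ga]; exists (fun i => g (widen_ord (leqnSn _) i)); split.
  by move=> i; rewrite Lg ffunE g0w.
by move: Zg; rewrite /inZ sum_but_max => /eqP ->.
Qed.

Lemma lift_root (fr : friendly L) t : forall h, pcons t h -> forall a, L a = L (h [::]) ->
  exists h', [/\ pcons t h', (forall q, L (h' q) = L (h q)) & h' [::] = a].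
Proof.
elim/tree_ind2: t => ts IH h hc a La.
case En: (size ts) => [|n].
  exists (fun q => if q == [::] then a else h q); split => //.
    move=> [|j q] /=; first by rewrite /kk /= En.
    by rewrite En.
  by case=> [|j q].
have h0 := hc [::] isT; rewrite /kk /= En in h0; have {}h0 := h0 isT.
have E : L a = L (\sum_(i < n.+1) h [:: val i]) by rewrite La h0.
have [c' [Lc' Sc']] := fstep fr E.
have: forall i : 'I_n.+1, exists h', [/\ pcons (nth leaf ts i) h',
     (forall q, L (h' q) = L (h (val i :: q))) & h' [::] = c' i].
  move=> i; apply: IH; first by rewrite En ltn_ord.
    move=> q vq kq; have := hc (val i :: q); rewrite /= En ltn_ord vq => /(_ isT kq).
    by [].
  by rewrite Lc'.
case/fin_all_exists => H HP.
exists (fun q => match q with [::] => a | i :: q' => if (i < n.+1)%N then H (inord i) q' else h q end).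
split => //.
  move=> [|i q] vq kq.
    rewrite /kk /= En in kq *; rewrite -Sc'; apply: eq_bigr => i _ /=.
    by rewrite ltn_ord inord_val; case: (HP i).
  move: vq kq => /= /andP[]; rewrite En => lti vq kq; rewrite lti.
  have := HP (inord i); rewrite inordK // => -[hci _ _].
  by rewrite (hci q vq kq); apply: eq_bigr => j _ /=.
move=> [|i q] /=; first by [].
case: ifP => lti //; have := HP (inord i); rewrite inordK // => -[_ -> _]; rewrite /= inordK // lti.
Qed.


Lemma prefix_rcons_case (p q : seq nat) i : prefix p (rcons q i) = prefix p q || (p == rcons q i).
Proof.
elim: q p => [|x q IH] [|y p] //=.
by rewrite IH eqseq_cons andb_orr.
Qed.

Lemma glue (fr : friendly L) t p hm hp : valid t p -> pcons (subtree t p) hm -> pcons (cut t p) hp ->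
  L (hm [::]) = L (hp p) ->
  exists H, pcons t H /\ forall q, L (H q) = if prefix p q then L (hm (drop (size p) q)) else L (hp q).
Proof.
move=> vp hmc hpc Lm.
have [hm' [hmc' Lhm' hm0]] := lift_root fr hmc (esym Lm).
exists (fun q => if prefix p q then hm' (drop (size p) q) else hp q); split; last first.
  by move=> q; case: ifP => //; rewrite Lhm'.
move=> q vq kq; case: (boolP (prefix p q)) => pq.
  case/prefixP: (pq) => r qE; subst q.
  rewrite drop_size_cat //.
  have vr : valid (subtree t p) r by move: vq; rewrite valid_cat vp.
  have kr : kk t (p ++ r) = kk (subtree t p) r by rewrite /kk subtree_cat.
  rewrite kr in kq *; rewrite (hmc' r vr kq); apply: eq_bigr => i _.
  by rewrite rcons_cat prefix_prefix drop_size_cat.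
have qp : q != p by apply: contraNneq pq => ->; rewrite prefix_refl.
have vq' : valid (cut t p) q by rewrite valid_cut // vq (negPf pq).
have kq' : kk (cut t p) q = kk t q by rewrite kk_cut // (negPf qp).
rewrite -kq' in kq *; rewrite (hpc q vq' kq); apply: eq_bigr => i _.
rewrite prefix_rcons_case (negPf pq) /=; case: eqP => // pE.
by rewrite -pE drop_size hm0.
Qed.

Lemma join_imL (fr : friendly L) T (e : edge T) lm lp :
  lm \in imL L (Tminus e) -> lp \in imL L (Tplus e) ->
  lab_at L lm [::] = lab_at L lp (epath e) -> join L lm lp \in imL L T.
Proof.
move=> /imLP[hm [hmc hml]] /imLP[hp [hpc hpl]] eq.
have vp := epath_valid e.
have lab_m : forall r, valid (subtree T (epath e)) r -> lab_at L lm r = L (hm r).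
  by move=> r /edge_of[f <-]; rewrite lab_at_epath hml.
have lab_p : forall r, valid (cut T (epath e)) r -> lab_at L lp r = L (hp r).
  by move=> r /edge_of[f <-]; rewrite lab_at_epath hpl.
have E : L (hm [::]) = L (hp (epath e)).
  by rewrite -lab_m // -lab_p ?eq // valid_cut // vp prefix_refl eqxx.
have [H [Hc Hl]] := glue fr vp hmc hpc E.
apply/imLP; exists H; split => // e'; rewrite ffunE /below Hl; case: ifP => pq.
  case/prefixP: pq => r eE; rewrite eE drop_size_cat //; apply: lab_m.
  by have := epath_valid e'; rewrite eE valid_cat vp.
by rewrite lab_p // valid_cut // epath_valid pq.
Qed.

End Lab2.


Lemma catI (p : seq nat) : injective (cat p).
Proof. by elim: p => //= x p IH s1 s2 [/IH]. Qed.

Section Ideal.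
Variables (G : finZmodType) (Lab : finType) (L : G -> Lab).

Definition mono t (lam : labeling Lab t) : {mpoly CC[na Lab t]} :=
  \prod_(e : edge t) avar e (lam e).

Lemma qvar_img t (lam : labeling Lab t) : lam \in imL L t ->
  comp_mpoly (qimage L t) (qvar L lam) = mono lam.
Proof.
move=> lin; rewrite /qvar; case: insubP => [x _ xv|]; last by rewrite lin.
by rewrite comp_mpolyXU -tnth_nth tnth_mktuple enum_rankK xv.
Qed.

Definition relab t t' (f : edge t -> edge t') : {mpoly CC[na Lab t]} -> {mpoly CC[na Lab t']} :=
  comp_mpoly [tuple avar (f (enum_val j).1) (enum_val j).2 | j < na Lab t].

Lemma relab_avar t t' (f : edge t -> edge t') e l : relab f (avar e l) = avar (f e) l.
Proof. by rewrite /relab /avar comp_mpolyXU -tnth_nth tnth_mktuple enum_rankK. Qed.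

Lemma relab_mono t t' (f : edge t -> edge t') (lam : labeling Lab t) :
  relab f (mono lam) = \prod_(e : edge t) avar (f e) (lam e).
Proof. by rewrite /mono {1}/relab rmorph_prod; apply: eq_bigr => e _; rewrite -relab_avar. Qed.


Variables (T : tree) (e : edge T).
Definition iota_m (f : edge (Tminus e)) : edge T := toE e (epath e ++ epath f).
Definition iota_p (f : edge (Tplus e)) : edge T := toE e (epath f).

Lemma dec_minus lm lp : mono (join L lm lp) = relab iota_m (mono lm) *
   \prod_(e' : edge T | ~~ below e e') avar e' (lab_at L lp (epath e')).
Proof.
rewrite /mono (bigID (fun e' => below e e')) /=; congr (_ * _); last first.
  by apply: eq_bigr => e' /negPf nb; rewrite ffunE nb.
rewrite relab_mono.
pose F q := avar (toE e q) (lab_at L lm (drop (size (epath e)) q)).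
transitivity (\prod_(e' : edge T | prefix (epath e) (epath e')) F (epath e')).
  by apply: eq_bigr => e' be; rewrite ffunE be /F toE_epath.
transitivity (\prod_(f : edge (Tminus e)) F (epath e ++ epath f)); last first.
  by apply: eq_bigr => f _; rewrite /F drop_size_cat // lab_at_epath.
rewrite (@big_edges _ 1 *%R T (prefix (epath e)) F).
rewrite (@big_edges _ 1 *%R (Tminus e) xpredT (fun r => F (epath e ++ r))).
rewrite -big_filter -(big_map (cat (epath e)) xpredT F).
apply: perm_big; apply: uniq_perm.
- by apply: filter_uniq; apply: uniq_edges.
- by rewrite (map_inj_uniq (@catI _)) uniq_edges.
move=> q; rewrite mem_filter mem_edges; apply/idP/idP.
  case/andP => /prefixP[r ->]; rewrite valid_cat epath_valid /= => vr.
  by apply: map_f; rewrite mem_edges.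
case/mapP => r; rewrite mem_edges => vr ->.
by rewrite prefix_prefix valid_cat epath_valid.
Qed.

Lemma dec_plus lm lp : lab_at L lm [::] = lab_at L lp (epath e) ->
  mono (join L lm lp) = relab iota_p (mono lp) *
   \prod_(e' : edge T | prefix (epath e) (epath e') && (epath e' != epath e))
       avar e' (lab_at L lm (drop (size (epath e)) (epath e'))).
Proof.
move=> eq; rewrite /mono (bigID (fun e' => prefix (epath e) (epath e') && (epath e' != epath e))) /=.
rewrite mulrC; congr (_ * _); last first.
  by apply: eq_bigr => e' /andP[be _]; rewrite ffunE /below be.
rewrite relab_mono.
pose F q := avar (toE e q) (lab_at L lp q).
transitivity (\prod_(e' : edge T | ~~ (prefix (epath e) (epath e') && (epath e' != epath e))) F (epath e')).
  apply: eq_bigr => e' nsb; rewrite ffunE /F toE_epath /below.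
  case: ifP => be //; move: nsb; rewrite be /= negbK => /eqP ->.
  by rewrite drop_size eq.
transitivity (\prod_(f : edge (Tplus e)) F (epath f)); last first.
  by apply: eq_bigr => f _; rewrite /F lab_at_epath.
rewrite (@big_edges _ 1 *%R T (fun q => ~~ (prefix (epath e) q && (q != epath e))) F).
rewrite (@big_edges _ 1 *%R (Tplus e) xpredT F).
rewrite -big_filter.
apply: perm_big; apply: uniq_perm.
- by apply: filter_uniq; apply: uniq_edges.
- by apply: uniq_edges.
by move=> q; rewrite mem_filter !mem_edges /Tplus valid_cut ?epath_valid // andbC.
Qed.

End Ideal.

Lemma idealE (G : finZmodType) (Lab : finType) (L : G -> Lab) t (p : {mpoly CC[nq L t]}) :
  (p \in ideal L t) = (comp_mpoly (qimage L t) p == 0).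
Proof. by []. Qed.

Lemma img_prod (G : finZmodType) (Lab : finType) (L : G -> Lab) t d (lam : 'I_d -> labeling Lab t) :
  (forall i, lam i \in imL L t) ->
  comp_mpoly (qimage L t) (\prod_(i < d) qvar L (lam i)) = \prod_(i < d) mono (lam i).
Proof. by move=> h; rewrite rmorph_prod; apply: eq_bigr => i _; apply: qvar_img. Qed.

Lemma relab_prod (Lab : finType) t t' (f : edge t -> edge t') d (F : 'I_d -> {mpoly CC[na Lab t]}) :
  relab f (\prod_(i < d) F i) = \prod_(i < d) relab f (F i).
Proof. by rewrite /relab rmorph_prod. Qed.

Lemma key_prod (R S : comRingType) d (phi : R -> S) (A B : 'I_d -> R) (C : 'I_d -> S) :
  (forall F : 'I_d -> R, phi (\prod_(i < d) F i) = \prod_(i < d) phi (F i)) ->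
  \prod_(i < d) A i = \prod_(i < d) B i ->
  \prod_(i < d) (phi (A i) * C i) - \prod_(i < d) (phi (B i) * C i) == 0.
Proof.
move=> hphi hAB; rewrite subr_eq0 !big_split /= -!hphi hAB //.
Qed.

Unset Implicit Arguments.
Set Strict Implicit.


Theorem lemma4p4 (G : finZmodType) (Lab : finType) (L : G -> Lab)
    (T : tree) (e : edge T) :
  friendly L -> interior_edge e ->
  (* the statement for g in I_{T_{e,-},L} *)
  (forall (d : nat) (lam lam' : 'I_d -> labeling Lab (Tminus e))
          (nu : 'I_d -> labeling Lab (Tplus e)),
     (forall i, lam i \in imL L (Tminus e)) ->
     (forall i, lam' i \in imL L (Tminus e)) ->
     (* (l_i, m_i) and (l'_i, m_i) share the label m_i on e (the root edge) *)
     (forall i, lab_at L (lam' i) [::] = lab_at L (lam i) [::]) ->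
     (\prod_(i < d) qvar L (lam i) - \prod_(i < d) qvar L (lam' i))
        \in ideal L (Tminus e) ->
     (* (m_i, n_i) in im(L^{T_{e,+}}) *)
     (forall i, nu i \in imL L (Tplus e)) ->
     (forall i, lab_at L (nu i) (epath e) = lab_at L (lam i) [::]) ->
     [/\ (forall i, join L (lam i) (nu i) \in imL L T),
         (forall i, join L (lam' i) (nu i) \in imL L T) &
         (\prod_(i < d) qvar L (join L (lam i) (nu i))
            - \prod_(i < d) qvar L (join L (lam' i) (nu i))) \in ideal L T])
  /\
  (* the analogous statement for g in I_{T_{e,+},L} *)
  (forall (d : nat) (nu nu' : 'I_d -> labeling Lab (Tplus e))
          (lam : 'I_d -> labeling Lab (Tminus e)),
     (forall i, nu i \in imL L (Tplus e)) ->
     (forall i, nu' i \in imL L (Tplus e)) ->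
     (* (m_i, n_i) and (m_i, n'_i) share the label m_i on e *)
     (forall i, lab_at L (nu' i) (epath e) = lab_at L (nu i) (epath e)) ->
     (\prod_(i < d) qvar L (nu i) - \prod_(i < d) qvar L (nu' i))
        \in ideal L (Tplus e) ->
     (* (l_i, m_i) in im(L^{T_{e,-}}) *)
     (forall i, lam i \in imL L (Tminus e)) ->
     (forall i, lab_at L (lam i) [::] = lab_at L (nu i) (epath e)) ->
     [/\ (forall i, join L (lam i) (nu i) \in imL L T),
         (forall i, join L (lam i) (nu' i) \in imL L T) &
         (\prod_(i < d) qvar L (join L (lam i) (nu i))
            - \prod_(i < d) qvar L (join L (lam i) (nu' i))) \in ideal L T]).
Proof.
move=> fr _; split.
  move=> d lam lam' nu lin lin' eqm gI nin nueq.
  have J1 : forall i, join L (lam i) (nu i) \in imL L T.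
    by move=> i; apply: join_imL => //; rewrite nueq.
  have J2 : forall i, join L (lam' i) (nu i) \in imL L T.
    by move=> i; apply: join_imL => //; rewrite nueq eqm.
  split => //.
  move: gI; rewrite !idealE !comp_mpolyB (img_prod lin) (img_prod lin') (img_prod J1) (img_prod J2).
  rewrite subr_eq0 => /eqP gE.
  rewrite (eq_bigr _ (fun i _ => @dec_minus _ _ L T e (lam i) (nu i))).
  rewrite [X in _ - X](eq_bigr _ (fun i _ => @dec_minus _ _ L T e (lam' i) (nu i))).
  have K := @key_prod _ _ d (relab (@iota_m T e)) (fun i => mono (lam i)) (fun i => mono (lam' i))
     (fun i => \prod_(e' : edge T | ~~ below e e') avar e' (lab_at L (nu i) (epath e'))) (fun F => relab_prod (@iota_m T e) F) gE.
  exact: K.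
move=> d nu nu' lam nin nin' eqn gI lin leq.
have leq' : forall i, lab_at L (lam i) [::] = lab_at L (nu' i) (epath e) by move=> i; rewrite leq eqn.
have J1 : forall i, join L (lam i) (nu i) \in imL L T by move=> i; apply: join_imL.
have J2 : forall i, join L (lam i) (nu' i) \in imL L T by move=> i; apply: join_imL.
split => //.
move: gI; rewrite !idealE !comp_mpolyB (img_prod nin) (img_prod nin') (img_prod J1) (img_prod J2).
rewrite subr_eq0 => /eqP gE.
rewrite (eq_bigr _ (fun i _ => @dec_plus _ _ L T e (lam i) (nu i) (leq i))).
rewrite [X in _ - X](eq_bigr _ (fun i _ => @dec_plus _ _ L T e (lam i) (nu' i) (leq' i))).
have K := @key_prod _ _ d (relab (@iota_p T e)) (fun i => mono (nu i)) (fun i => mono (nu' i))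
   (fun i => \prod_(e' : edge T | prefix (epath e) (epath e') && (epath e' != epath e))
       avar e' (lab_at L (lam i) (drop (size (epath e)) (epath e'))))
   (fun F => relab_prod (@iota_p T e) F) gE.
exact: K.
Qed.
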